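(* Let $0\le b\le 1$ and $0\le\alpha<1$, and let $r_0=r_0(\alpha)$ be the real root in $(0,1)$ of the equation \[1-\alpha+(1+\alpha)r=2\big(1-\alpha+(2-\alpha)(1-b)r\big)(1-r)^3.\] Let $\mathcal{F}$ be the class of functions $f\in\mathcal{A}_b$, $f(z)=z+\sum_{n\ge2}a_nz^n$, with $|a_n|\le n$ for all $n\ge3$. Then: (i) every $f\in\mathcal{F}$ satisfies $\left|\frac{zf'(z)}{f(z)}-1\right|\le 1-\alpha$ for $|z|\le r_0$; (ii) $r_0(\alpha)$ is the radius of starlikeness of order $\alpha$ of $\mathcal{F}$; (iii) $r_0(1/2)$ is the radius of parabolic starlikeness of $\mathcal{F}$. All results are sharp: the function $f_0(z)=2z+2(1-b)z^2-\frac{z}{(1-z)^2}=z-2bz^2-\sum_{n\ge3}nz^n$ belongs to $\mathcal{F}$ and satisfies $\left|\frac{zf_0'(z)}{f_0(z)}-1\right|=1-\alpha$ and $\operatorname{Re}\frac{zf_0'(z)}{f_0(z)}=\alpha$ at $z=r_0$.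
   Context: $\mathbb{D}=\{z\in\mathbb{C}:|z|<1\}$. For $0\le b\le1$, $\mathcal{A}_b$ is the class of analytic functions $f$ on $\mathbb{D}$ of the form $f(z)=z+a_2z^2+a_3z^3+\cdots$ with $|a_2|=2b$. For a class $\mathcal{F}$ of analytic functions on $\mathbb{D}$ normalized by $f(0)=0$, $f'(0)=1$, and $0\le\alpha<1$, the radius of starlikeness of order $\alpha$ of $\mathcal{F}$ is the supremum of $r\in(0,1]$ such that every $f\in\mathcal{F}$ satisfies $f(z)\ne0$ for $0<|z|<r$ and $\operatorname{Re}\big(zf'(z)/f(z)\big)>\alpha$ for $|z|<r$ (the quotient being $1$ at $z=0$). The radius of parabolic starlikeness of $\mathcal{F}$ is the supremum of $r\in(0,1]$ such that every $f\in\mathcal{F}$ satisfies $\operatorname{Re}\big(zf'(z)/f(z)\big)>\left|zf'(z)/f(z)-1\right|$ for $|z|<r$. *)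

(* Defs.v *)
From Stdlib Require Import Reals.
From Coquelicot Require Import Coquelicot.
Open Scope R_scope.

Definition coeffs_Ab (b : R) (f : C -> C) (a : nat -> C) : Prop :=
  a 0%nat = 0%C /\ a 1%nat = 1%C /\ Cmod (a 2%nat) = 2 * b /\
  forall z : C, Cmod z < 1 -> is_pseries (K:=C_AbsRing) (V:=C_NormedModule) a z (f z).

Definition in_Ab (b : R) (f : C -> C) : Prop := exists a, coeffs_Ab b f a.

Definition in_F (b : R) (f : C -> C) : Prop :=
  exists a, coeffs_Ab b f a /\ forall n : nat, (3 <= n)%nat -> Cmod (a n) <= INR n.

(* w is the value of z f'(z) / f(z) when d = f'(z); by convention it is 1 at z = 0 *)
Definition logquot (f : C -> C) (z d w : C) : Prop :=
  (z = 0%C /\ w = 1%C) \/ (z <> 0%C /\ w = (z * d / f z)%C).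

Definition starlike_order_on (b alpha r : R) : Prop :=
  forall f, in_F b f ->
    (forall z : C, 0 < Cmod z < r -> f z <> 0%C) /\
    (forall z d w : C, Cmod z < r ->
       is_derive (K:=C_AbsRing) (V:=C_NormedModule) f z d ->
       logquot f z d w -> alpha < Re w).

Definition parabolic_on (b r : R) : Prop :=
  forall f, in_F b f ->
    forall z d w : C, Cmod z < r ->
       is_derive (K:=C_AbsRing) (V:=C_NormedModule) f z d ->
       logquot f z d w -> Cmod (w - 1)%C < Re w.

Definition radius_starlike (b alpha rho : R) : Prop :=
  is_lub (fun r => 0 < r <= 1 /\ starlike_order_on b alpha r) rho.

Definition radius_parabolic (b rho : R) : Prop :=
  is_lub (fun r => 0 < r <= 1 /\ parabolic_on b r) rho.

Definition f0 (b : R) (z : C) : C :=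
  (2 * z + 2 * (1 - b) * z * z - z / ((1 - z) * (1 - z)))%C.

Definition r0_eq (b alpha r : R) : Prop :=
  1 - alpha + (1 + alpha) * r = 2 * (1 - alpha + (2 - alpha) * (1 - b) * r) * (1 - r) ^ 3.

(* Main.v *)
Require Import Defs.
From Stdlib Require Import Reals Lra Lia Psatz.
From Coquelicot Require Import Coquelicot.
Open Scope R_scope.

Lemma series_by_err {K : AbsRing} {V : NormedModule K} (u : nat -> V) (l : V) (E : nat -> R) :
  (forall N, norm (minus (sum_n u N) l) <= E N) -> is_lim_seq E 0 -> is_series u l.
Proof.
  intros HE HL. apply is_lim_seq_spec in HL. unfold is_series.
  apply filterlim_locally. intros eps. specialize (HL eps).
  destruct HL as [N HN]. exists N. intros n Hn. apply norm_compat1.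
  specialize (HN n Hn). specialize (HE n). rewrite Rminus_0_r in HN.
  apply Rabs_lt_between in HN. lra.
Qed.

Lemma sum_n_stable {G : AbelianMonoid} (u : nat -> G) m :
  (forall k, (m < k)%nat -> u k = zero) -> forall N, (m <= N)%nat -> sum_n u N = sum_n u m.
Proof.
  intros H N HN. induction HN. reflexivity.
  rewrite sum_Sn, IHHN, H by lia. apply plus_zero_r.
Qed.

Lemma is_series_fin {K : AbsRing} {V : NormedModule K} (u : nat -> V) m :
  (forall k, (m < k)%nat -> u k = zero) -> is_series u (sum_n u m).
Proof.
  intros H. unfold is_series. apply filterlim_locally. intros eps.
  exists m. intros n Hn. rewrite (sum_n_stable u m H n Hn). apply ball_center.
Qed.

Definition tr3 {G : AbelianMonoid} (u : nat -> G) := fun k => if (k <? 3)%nat then zero else u k.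

Lemma is_series_tr3 {K : AbsRing} {V : NormedModule K} (u : nat -> V) l :
  is_series u l -> is_series (tr3 u) (minus l (sum_n u 2)).
Proof.
  intros H. set (s := fun k => if (k <? 3)%nat then u k else zero).
  assert (Hs: is_series s (sum_n u 2)).
  { replace (sum_n u 2) with (sum_n s 2).
    - apply is_series_fin. intros k Hk. unfold s. destruct (Nat.ltb_spec k 3); [lia|reflexivity].
    - apply sum_n_ext_loc. intros n Hn. unfold s. destruct (Nat.ltb_spec n 3); [reflexivity|lia]. }
  apply is_series_ext with (fun k => minus (u k) (s k)).
  - intros k; unfold s, tr3; destruct (k <? 3)%nat.
    + exact (minus_eq_zero _).
    + exact (minus_zero_r _).
  - apply is_series_minus; auto.
Qed.

Lemma series_norm_le {K : AbsRing} {V : NormedModule K} (u : nat -> V) (b : nat -> R) lu lb :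
  is_series u lu -> is_series b lb -> (forall k, norm (u k) <= b k) -> norm lu <= lb.
Proof.
  intros Hu Hb Hk.
  assert (Hp: forall N, norm (sum_n u N) <= sum_n b N).
  { induction N. rewrite !sum_O; auto. rewrite !sum_Sn. eapply Rle_trans. apply norm_triangle.
    apply Rplus_le_compat; auto. }
  assert (H1: is_lim_seq (fun N => norm (sum_n u N)) (norm lu)).
  { apply filterlim_comp with (locally lu). exact Hu. apply filterlim_norm. }
  assert (H2: is_lim_seq (sum_n b) lb) by exact Hb.
  pose proof (is_lim_seq_le _ _ _ _ Hp H1 H2) as H. simpl in H. exact H.
Qed.

Lemma lim_nq q : 0 <= q < 1 -> is_lim_seq (fun n => INR n * q ^ n) 0.
Proof.
  intros Hq. destruct (Req_dec q 0) as [H0|H0].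
  - apply is_lim_seq_incr_1. apply is_lim_seq_ext with (fun _ => 0).
    + intros n. subst. simpl. ring.
    + apply is_lim_seq_const.
  - set (a := fun n => INR (S n) * q ^ n).
    assert (Ha : forall n, a n <> 0).
    { intros n. unfold a. apply Rmult_integral_contrapositive. split.
      apply not_0_INR; lia. apply pow_nonzero; auto. }
    assert (Hinv : is_lim_seq (fun n => / INR (S n)) 0).
    { assert (H1 : is_lim_seq (fun n => INR (S n)) p_infty).
      { apply (is_lim_seq_incr_1 INR). apply is_lim_seq_INR. }
      pose proof (is_lim_seq_inv _ _ H1) as H2. simpl in H2. apply H2. discriminate. }
    assert (Hr : is_lim_seq (fun n => Rabs (a (S n) / a n)) q).
    { apply is_lim_seq_ext with (fun n => q + q * / INR (S n)).
      - intros n. unfold a. rewrite Rabs_pos_eq.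
        + rewrite !S_INR. simpl. field. split. apply pow_nonzero; auto.
          pose proof (pos_INR n). lra.
        + unfold Rdiv. apply Rmult_le_pos. apply Rmult_le_pos. apply pos_INR. apply pow_le; lra.
          apply Rlt_le, Rinv_0_lt_compat. apply Rmult_lt_0_compat. apply lt_0_INR; lia.
          apply pow_lt; lra.
      - apply (is_lim_seq_scal_l _ q 0) in Hinv. simpl in Hinv.
        pose proof (is_lim_seq_plus' _ _ _ _ (is_lim_seq_const q) Hinv) as H3.
        rewrite Rmult_0_r, Rplus_0_r in H3. exact H3. }
    assert (Hq1 : q < 1) by lra.
    pose proof (ex_series_DAlembert a q Hq1 Ha Hr) as Hex.
    apply ex_series_lim_0 in Hex.
    apply is_lim_seq_le_le with (fun _ => 0) (fun n => Rabs (a n)).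
    + intros n. unfold a. rewrite Rabs_pos_eq. split.
      apply Rmult_le_pos. apply pos_INR. apply pow_le; lra.
      apply Rmult_le_compat_r. apply pow_le; lra. rewrite S_INR. lra.
      apply Rmult_le_pos. apply pos_INR. apply pow_le; lra.
    + apply is_lim_seq_const.
    + exact Hex.
Qed.

Definition cp (z : C) (k : nat) : C := pow_n (K:=C_AbsRing) z k.

Lemma cp_0 z : cp z 0 = 1%C. Proof. reflexivity. Qed.
Lemma cp_S z k : cp z (S k) = (z * cp z k)%C. Proof. reflexivity. Qed.

Lemma Cmod_cp z k : Cmod (cp z k) = Cmod z ^ k.
Proof. induction k. rewrite cp_0, Cmod_1. reflexivity. rewrite cp_S, Cmod_mult, IHk. reflexivity. Qed.

Lemma cp_mult x z k : cp (x * z) k = (cp x k * cp z k)%C.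
Proof. induction k. rewrite !cp_0. ring. rewrite !cp_S, IHk. ring. Qed.

Lemma cp_R x k : cp (RtoC x) k = RtoC (x ^ k).
Proof. induction k. reflexivity. rewrite cp_S, IHk, <- RtoC_mult. reflexivity. Qed.

Lemma Cmod_1m z : 1 - Cmod z <= Cmod (1 - z)%C.
Proof.
  pose proof (Cmod_triangle (1 - z) z). replace (1 - z + z)%C with (RtoC 1) in H by ring.
  rewrite Cmod_1 in H. lra.
Qed.

Lemma partial_k (z : C) N :
  ((1 - z) * (1 - z) * sum_n (fun k => cp z k * RtoC (INR k)) N =
   z - RtoC (INR (S N)) * cp z (S N) + RtoC (INR N) * cp z (S (S N)))%C.
Proof.
  induction N.
  - rewrite sum_O, !cp_S, !cp_0. simpl INR. ring.
  - rewrite sum_Sn. change plus with Cplus. rewrite Cmult_plus_distr_l, IHN.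
    rewrite !cp_S. rewrite !S_INR, !RtoC_plus. ring.
Qed.

Lemma div_solve (a X Y : C) : a <> 0%C -> (a * X = Y)%C -> X = (Y / a)%C.
Proof. intros Ha H. subst. field. auto. Qed.

Lemma cseries_k (z : C) : Cmod z < 1 ->
  is_series (K:=C_AbsRing) (V:=C_NormedModule) (fun k => (cp z k * RtoC (INR k))%C)
            (z / ((1 - z) * (1 - z)))%C.
Proof.
  intros Hz.
  assert (Hq0 : 0 <= (Cmod z)) by apply Cmod_ge_0.
  assert (H1z : 0 < Cmod (1 - z)%C) by (pose proof (Cmod_1m z); lra).
  assert (Hnz : (1 - z)%C <> 0%C) by (intro E; rewrite E, Cmod_0 in H1z; lra).
  apply series_by_err with (E := fun N => (INR (S N) * (Cmod z) ^ (S N) + INR N * (Cmod z) ^ N) / (1 - (Cmod z)) ^ 2).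
  - intros N. change (norm (minus (sum_n (fun k => (cp z k * INR k)%C) N) (z / ((1 - z) * (1 - z)))%C))
      with (Cmod (sum_n (fun k => (cp z k * INR k)%C) N - z / ((1 - z) * (1 - z)))%C).
    pose proof (partial_k z N) as Hp.
    set (Sm := sum_n _ N) in *.
    apply div_solve in Hp; [|apply Cmult_neq_0; auto].
    assert (HS : @eq C (Sm - z / ((1 - z) * (1 - z)))%C
       ((- RtoC (INR (S N)) * cp z (S N) + RtoC (INR N) * cp z (S (S N))) / ((1 - z) * (1 - z)))%C).
    { rewrite Hp. field. auto. }
    rewrite HS, Cmod_div by (apply Cmult_neq_0; auto).
    rewrite Cmod_mult.
    assert (Hnum : Cmod (- RtoC (INR (S N)) * cp z (S N) + RtoC (INR N) * cp z (S (S N)))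
                   <= INR (S N) * (Cmod z) ^ (S N) + INR N * (Cmod z) ^ N).
    { eapply Rle_trans. apply Cmod_triangle. rewrite !Cmod_mult, !Cmod_cp, Cmod_opp, !Cmod_R.
      rewrite !Rabs_pos_eq by apply pos_INR. apply Rplus_le_compat_l.
      apply Rmult_le_compat_l. apply pos_INR.
      replace (Cmod z ^ (S (S N))) with (Cmod z ^ 2 * Cmod z ^ N) by (simpl; ring).
      assert (Cmod z ^ 2 <= 1) by nra. pose proof (pow_le (Cmod z) N Hq0). nra. }
    assert (Hden : (1 - (Cmod z)) ^ 2 <= Cmod (1 - z)%C * Cmod (1 - z)%C).
    { pose proof (Cmod_1m z). nra. }
    unfold Rdiv. apply Rmult_le_compat; auto. apply Cmod_ge_0.
    apply Rlt_le, Rinv_0_lt_compat. nra.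
    apply Rinv_le_contravar; auto. nra.
  - replace 0 with ((0 + 0) / (1 - (Cmod z)) ^ 2) by (field; nra).
    apply is_lim_seq_div'. 2: apply is_lim_seq_const. 2: nra.
    apply is_lim_seq_plus'. apply (is_lim_seq_incr_1 (fun n => INR n * (Cmod z) ^ n)). apply lim_nq; lra.
    apply lim_nq; lra.
Qed.

Lemma is_series_R_of_C (u : nat -> R) (l : R) :
  is_series (K:=C_AbsRing) (V:=C_NormedModule) (fun k => RtoC (u k)) (RtoC l) -> is_series u l.
Proof.
  intros H. unfold is_series in *. apply filterlim_locally. intros eps.
  assert (Hnf : 0 < norm_factor (K:=C_AbsRing) (V:=C_NormedModule)) by apply norm_factor_gt_0.
  assert (He : 0 < eps / norm_factor (K:=C_AbsRing) (V:=C_NormedModule)).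
  { apply Rdiv_lt_0_compat; auto. apply cond_pos. }
  pose proof (proj1 (filterlim_locally _ _) H (mkposreal _ He)) as H'.
  destruct H' as [N HN]. exists N. intros n Hn. apply norm_compat1.
  specialize (HN n Hn). apply norm_compat2 in HN. simpl in HN.
  assert (Hs : forall m, sum_n (fun k => RtoC (u k)) m = RtoC (sum_n u m)).
  { induction m. rewrite !sum_O. reflexivity. rewrite !sum_Sn, IHm.
    change (@plus C_AbelianMonoid (RtoC (sum_n u m)) (RtoC (u (S m))) = RtoC (Rplus (sum_n u m) (u (S m)))).
    rewrite RtoC_plus. reflexivity. }
  rewrite Hs in HN. change (norm (minus (RtoC (sum_n u n)) (RtoC l))) with (Cmod (RtoC (sum_n u n) - RtoC l)%C) in HN.
  rewrite <- RtoC_minus, Cmod_R in HN. change (norm (minus (sum_n u n) l)) with (Rabs (sum_n u n - l)).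
  replace (norm_factor * (eps / norm_factor)) with (pos eps) in HN by (field; lra). exact HN.
Qed.

Lemma rseries_k (s : R) : 0 <= s < 1 -> is_series (fun k => INR k * s ^ k) (s / (1 - s) ^ 2).
Proof.
  intros Hs. apply is_series_R_of_C.
  assert (Hz : Cmod (RtoC s) < 1) by (rewrite Cmod_R, Rabs_pos_eq; lra).
  pose proof (cseries_k _ Hz) as H.
  eapply is_series_ext. 2: { replace (RtoC (s / (1 - s) ^ 2)) with (RtoC s / ((1 - RtoC s) * (1 - RtoC s)))%C. exact H.
    rewrite <- RtoC_minus, <- RtoC_mult, <- RtoC_div. f_equal. field. lra.
    apply Rmult_integral_contrapositive; split; lra. }
  intros k. simpl. rewrite cp_R, <- RtoC_mult. f_equal. ring.
Qed.

Definition T (s : R) := s / (1 - s) ^ 2 - s - 2 * s ^ 2.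

Section F.
Variables (b : R) (f : C -> C) (a : nat -> C).
Hypothesis Hc : coeffs_Ab b f a.
Hypothesis Hn : forall n, (3 <= n)%nat -> Cmod (a n) <= INR n.

Lemma ser_f u : Cmod u < 1 ->
  is_series (K:=C_AbsRing) (V:=C_NormedModule) (fun k => cp u k * a k)%C (f u).
Proof. intros Hu. destruct Hc as [_ [_ [_ H]]]. exact (H u Hu). Qed.

Lemma sum2_c u : sum_n (fun k => cp u k * a k)%C 2 = (u + a 2%nat * (u * u))%C.
Proof.
  destruct Hc as [H0 [H1 _]]. rewrite !sum_Sn, sum_O.
  change (((cp u 0 * a 0%nat) + (cp u 1 * a 1%nat)) + (cp u 2 * a 2%nat) = u + a 2%nat * (u * u))%C.
  rewrite H0, H1, !cp_S, cp_0. ring.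
Qed.

Lemma sum2_r s : sum_n (fun k => INR k * s ^ k) 2 = s + 2 * s ^ 2.
Proof. rewrite !sum_Sn, sum_O. change ((INR 0 * s ^ 0 + INR 1 * s ^ 1) + INR 2 * s ^ 2 = s + 2 * s ^ 2). simpl. ring. Qed.

Lemma LB z : Cmod z < 1 -> Cmod (f z - z - a 2%nat * (z * z))%C <= T (Cmod z).
Proof.
  intros Hz.
  pose proof (is_series_tr3 _ _ (ser_f z Hz)) as H1.
  assert (Hr : 0 <= Cmod z < 1) by (split; [apply Cmod_ge_0|exact Hz]).
  pose proof (is_series_tr3 _ _ (rseries_k _ Hr)) as H2.
  pose proof (series_norm_le _ _ _ _ H1 H2) as H3.
  rewrite sum2_c, sum2_r in H3.
  change (norm (minus (f z) (z + a 2%nat * (z * z))%C)) with (Cmod (f z - (z + a 2%nat * (z * z)))%C) in H3.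
  replace (f z - z - a 2%nat * (z * z))%C with (f z - (z + a 2%nat * (z * z)))%C by ring.
  unfold T. change (minus (Cmod z / (1 - Cmod z) ^ 2) (Cmod z + 2 * Cmod z ^ 2)) with
    (Cmod z / (1 - Cmod z) ^ 2 - (Cmod z + 2 * Cmod z ^ 2)) in H3.
  replace (Cmod z / (1 - Cmod z) ^ 2 - Cmod z - 2 * Cmod z ^ 2) with
    (Cmod z / (1 - Cmod z) ^ 2 - (Cmod z + 2 * Cmod z ^ 2)) by ring.
  apply H3. intros k. unfold tr3. destruct (Nat.ltb_spec k 3).
  - rewrite norm_zero. apply Rle_refl.
  - change (Cmod (cp z k * a k)%C <= INR k * Cmod z ^ k).
    rewrite Cmod_mult, Cmod_cp. rewrite Rmult_comm. apply Rmult_le_compat_r.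
    apply pow_le, Cmod_ge_0. apply Hn; lia.
Qed.
End F.

Section F2.
Variables (b : R) (f : C -> C) (a : nat -> C).
Hypothesis Hc : coeffs_Ab b f a.
Hypothesis Hn : forall n, (3 <= n)%nat -> Cmod (a n) <= INR n.

Lemma DIFF z t : Cmod z < 1 -> 0 <= t -> (1 + t) * Cmod z < 1 ->
  Cmod (f (RtoC (1 + t) * z) - RtoC (1 + t) * f z)%C <=
  2 * b * Cmod z ^ 2 * (t + t ^ 2) + (T ((1 + t) * Cmod z) - (1 + t) * T (Cmod z)).
Proof.
  intros Hz Ht Hyz.
  remember (Cmod z) as r eqn:Hrdef.
  assert (Hr0 : 0 <= r) by (rewrite Hrdef; apply Cmod_ge_0).
  remember (RtoC (1 + t) * z)%C as y eqn:Hydef.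
  assert (Hy : Cmod y = (1 + t) * r).
  { rewrite Hydef, Cmod_mult, Cmod_R, Rabs_pos_eq by lra. rewrite Hrdef. reflexivity. }
  assert (Hy1 : Cmod y < 1) by lra.
  pose proof (is_series_minus _ _ _ _ (ser_f b f a Hc y Hy1)
     (is_series_scal (RtoC (1 + t)) _ _ (ser_f b f a Hc z (ltac:(rewrite <- Hrdef; exact Hz))))) as He.
  apply is_series_tr3 in He.
  assert (Hry : 0 <= (1 + t) * r < 1) by (split; [nra|lra]).
  assert (Hrz : 0 <= r < 1) by (split; lra).
  pose proof (is_series_minus _ _ _ _ (rseries_k _ Hry) (is_series_scal (1 + t) _ _ (rseries_k _ Hrz))) as Hb.
  apply is_series_tr3 in Hb.
  pose proof (series_norm_le _ _ _ _ He Hb) as H3.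
  destruct Hc as [H0 [H1 [H2 _]]].
  set (E2 := (a 2%nat * (z * z) * (RtoC (1 + t) * RtoC (1 + t) - RtoC (1 + t)))%C).
  match type of H3 with context [sum_n ?F 2] =>
    let Hx := fresh in
    assert (Hx : sum_n F 2 = E2);
    [ rewrite !sum_Sn, sum_O;
      change (((cp y 0 * a 0%nat - RtoC (1 + t) * (cp z 0 * a 0%nat)) + (cp y 1 * a 1%nat - RtoC (1 + t) * (cp z 1 * a 1%nat)))
            + (cp y 2 * a 2%nat - RtoC (1 + t) * (cp z 2 * a 2%nat)) = E2)%C;
      rewrite H0, H1, !cp_S, !cp_0; unfold E2; rewrite Hydef; ring
    | rewrite Hx in H3 ] end.
  match type of H3 with context [sum_n ?F 2] =>
    let Hx := fresh in
    assert (Hx : sum_n F 2 = 2 * ((1 + t) * r) ^ 2 - (1 + t) * (2 * r ^ 2));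
    [ rewrite !sum_Sn, sum_O;
      change (((INR 0 * ((1 + t) * r) ^ 0 - (1 + t) * (INR 0 * r ^ 0)) + (INR 1 * ((1 + t) * r) ^ 1 - (1 + t) * (INR 1 * r ^ 1)))
            + (INR 2 * ((1 + t) * r) ^ 2 - (1 + t) * (INR 2 * r ^ 2)) = 2 * ((1 + t) * r) ^ 2 - (1 + t) * (2 * r ^ 2));
      simpl; ring
    | rewrite Hx in H3 ] end.
  change (norm (minus (plus (f y) (opp (scal (RtoC (1 + t)) (f z)))) E2)) with
     (Cmod ((f y - RtoC (1 + t) * f z) - E2))%C in H3.
  change (minus (plus ((1 + t) * r / (1 - (1 + t) * r) ^ 2) (opp (scal (1 + t) (r / (1 - r) ^ 2))))
             (2 * ((1 + t) * r) ^ 2 - (1 + t) * (2 * r ^ 2))) with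
     (((1 + t) * r / (1 - (1 + t) * r) ^ 2 - (1 + t) * (r / (1 - r) ^ 2))
             - (2 * ((1 + t) * r) ^ 2 - (1 + t) * (2 * r ^ 2))) in H3.
  assert (HE2n : Cmod E2 = 2 * b * r ^ 2 * (t + t ^ 2)).
  { unfold E2. rewrite !Cmod_mult, H2.
    replace (RtoC (1 + t) * RtoC (1 + t) - RtoC (1 + t))%C with (RtoC (t + t ^ 2)).
    rewrite Cmod_R, Rabs_pos_eq by nra. rewrite <- Hrdef. ring.
    rewrite <- RtoC_mult, <- RtoC_minus. f_equal. ring. }
  clearbody E2.
  replace (f y - RtoC (1 + t) * f z)%C with (E2 + ((f y - RtoC (1 + t) * f z) - E2))%C by ring.
  eapply Rle_trans. apply Cmod_triangle. rewrite HE2n.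
  apply Rplus_le_compat_l. eapply Rle_trans. apply H3.
  - intros k. unfold tr3. destruct (Nat.ltb_spec k 3).
    + rewrite norm_zero. apply Rle_refl.
    + change (Cmod (cp y k * a k - RtoC (1 + t) * (cp z k * a k))%C <=
              INR k * ((1 + t) * r) ^ k - (1 + t) * (INR k * r ^ k)).
      assert (Hpk : (1 + t) <= (1 + t) ^ k).
      { replace (1 + t) with ((1 + t) ^ 1) at 1 by ring. apply Rle_pow. lra. lia. }
      replace (cp y k * a k - RtoC (1 + t) * (cp z k * a k))%C with
        (cp z k * a k * RtoC ((1 + t) ^ k - (1 + t)))%C.
      * rewrite !Cmod_mult, Cmod_cp, Cmod_R, Rabs_pos_eq by lra. rewrite <- Hrdef.
        rewrite Rpow_mult_distr.
        assert (Hak : Cmod (a k) <= INR k) by (apply Hn; lia).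
        pose proof (pow_le r k Hr0) as Hpr. pose proof (Cmod_ge_0 (a k)) as Ha0.
        revert Hak Hpr Hpk Ha0. generalize (r ^ k) ((1 + t) ^ k) (INR k) (Cmod (a k)).
        intros P Q I A Hak Hpr Hpk Ha0.
        assert (0 <= P * (Q - (1 + t))) by (apply Rmult_le_pos; lra). nra.
      * rewrite Hydef, cp_mult, cp_R, RtoC_minus. ring.
  - unfold T. lra.
Qed.
End F2.

Lemma DER (f : C -> C) z d : is_derive (K:=C_AbsRing) (V:=C_NormedModule) f z d ->
  forall eps, 0 < eps -> exists del, 0 < del /\ forall y, Cmod (y - z)%C < del ->
    Cmod (f y - f z - (y - z) * d)%C <= eps * Cmod (y - z)%C.
Proof.
  intros [_ H] eps He. specialize (H z (fun P HP => HP)).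
  specialize (H (mkposreal eps He)). destruct H as [del Hdel].
  exists (pos del). split. apply cond_pos. intros y Hy.
  apply (Hdel y). apply (norm_compat1 (V := AbsRing_NormedModule C_AbsRing)). exact Hy.
Qed.

Definition Q (r t : R) := (1 + t) * r * (r * (2 - 2 * r - t * r)) / ((1 - r - t * r) ^ 2 * (1 - r) ^ 2).

Lemma Qcont r : 0 < r < 1 -> forall eps, 0 < eps -> exists del, 0 < del /\
  forall t, Rabs t < del -> Rabs (Q r t - Q r 0) < eps.
Proof.
  intros Hr eps He.
  assert (Hc : continuity_pt (Q r) 0).
  { unfold Q. reg. apply Rmult_integral_contrapositive; split; apply pow_nonzero; lra. }
  unfold continuity_pt, continue_in, limit1_in, limit_in in Hc.
  destruct (Hc eps He) as [del [Hdel Hc2]]. exists del. split; auto.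
  intros t Ht. destruct (Req_dec t 0) as [E|E].
  - subst. rewrite Rminus_diag, Rabs_R0. exact He.
  - apply (Hc2 t). split. split. exact I. auto. simpl. unfold R_dist. replace (t - 0) with t by ring. exact Ht.
Qed.

Lemma eps_le x y c : 0 < c -> (forall eps, 0 < eps -> x <= y + eps * c) -> x <= y.
Proof.
  intros Hc H. destruct (Rle_dec x y) as [|Hn]; auto.
  assert (Hp : 0 < (x - y) / (2 * c)) by (apply Rdiv_lt_0_compat; lra).
  specialize (H _ Hp). exfalso.
  assert ((x - y) / (2 * c) * c = (x - y) / 2) by (field; lra). lra.
Qed.

Section F3.
Variables (b : R) (f : C -> C) (a : nat -> C).
Hypothesis Hc : coeffs_Ab b f a.
Hypothesis Hn : forall n, (3 <= n)%nat -> Cmod (a n) <= INR n.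
Hypothesis Hb : 0 <= b <= 1.

Lemma E1 z d : 0 < Cmod z < 1 -> is_derive (K:=C_AbsRing) (V:=C_NormedModule) f z d ->
  Cmod (z * d - f z)%C <= 2 * b * Cmod z ^ 2 + 2 * Cmod z ^ 2 / (1 - Cmod z) ^ 3 - 2 * Cmod z ^ 2.
Proof.
  intros Hz Hd.
  pose proof (DIFF b f a Hc Hn z) as HD.
  pose proof (DER f z d Hd) as HR.
  remember (Cmod z) as r eqn:Hrdef.
  apply eps_le with (c := r + 1). lra. intros eps He.
  destruct (HR eps He) as [del1 [Hdel1 H1]].
  destruct (Qcont r Hz eps He) as [del2 [Hdel2 H2]].
  set (t0 := Rmin (Rmin (del1 / (2 * r)) (del2 / 2)) ((1 - r) / (2 * r))).
  assert (Ht : 0 < t0).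
  { unfold t0. apply Rmin_pos. apply Rmin_pos. apply Rdiv_lt_0_compat; lra.
    lra. apply Rdiv_lt_0_compat; lra. }
  assert (Ht1 : t0 <= del1 / (2 * r)) by (unfold t0; eapply Rle_trans; [apply Rmin_l|apply Rmin_l]).
  assert (Ht2 : t0 <= del2 / 2) by (unfold t0; eapply Rle_trans; [apply Rmin_l|apply Rmin_r]).
  assert (Ht3 : t0 <= (1 - r) / (2 * r)) by (unfold t0; apply Rmin_r).
  clearbody t0. rename t0 into t.
  assert (Htr1 : t * r <= del1 / 2).
  { apply Rmult_le_compat_r with (r := r) in Ht1; [|lra].
    replace (del1 / (2 * r) * r) with (del1 / 2) in Ht1 by (field; lra). exact Ht1. }
  assert (Htr3 : t * r <= (1 - r) / 2).
  { apply Rmult_le_compat_r with (r := r) in Ht3; [|lra].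
    replace ((1 - r) / (2 * r) * r) with ((1 - r) / 2) in Ht3 by (field; lra). exact Ht3. }
  assert (Hyr : (1 + t) * r < 1) by lra.
  specialize (HD t (ltac:(lra)) (ltac:(lra)) Hyr).
  set (y := (RtoC (1 + t) * z)%C) in *.
  assert (Hyz : (y - z = RtoC t * z)%C) by (unfold y; rewrite RtoC_plus; ring).
  assert (Hyzn : Cmod (y - z)%C = t * r).
  { rewrite Hyz, Cmod_mult, Cmod_R, Rabs_pos_eq by lra. rewrite Hrdef. reflexivity. }
  specialize (H1 y (ltac:(rewrite Hyzn; lra))). rewrite Hyzn in H1.
  assert (Hid : (RtoC t * (z * d - f z) = (f y - RtoC (1 + t) * f z) - (f y - f z - (y - z) * d))%C).
  { rewrite Hyz, RtoC_plus. ring. }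
  assert (Htri : t * Cmod (z * d - f z)%C <= 2 * b * r ^ 2 * (t + t ^ 2) + (T ((1 + t) * r) - (1 + t) * T r) + eps * (t * r)).
  { replace (t * Cmod (z * d - f z)%C) with (Cmod (RtoC t * (z * d - f z))%C)
      by (rewrite Cmod_mult, Cmod_R, Rabs_pos_eq by lra; reflexivity).
    rewrite Hid. unfold Cminus at 1. eapply Rle_trans. apply Cmod_triangle. rewrite Cmod_opp. lra. }
  assert (HTQ : T ((1 + t) * r) - (1 + t) * T r = t * (Q r t - 2 * r ^ 2 * (1 + t))).
  { unfold T, Q. field. split; lra. }
  assert (HQ0 : Q r 0 = 2 * r ^ 2 / (1 - r) ^ 3) by (unfold Q; field; lra).
  specialize (H2 t (ltac:(rewrite Rabs_pos_eq; lra))).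
  apply Rabs_lt_between in H2. rewrite HQ0 in H2.
  rewrite HTQ in Htri.
  clearbody y. clear -Htri H2 Ht Hz Hb He.
  revert Htri H2. generalize (Cmod (z * d - f z)%C) (Q r t) (2 * r ^ 2 / (1 - r) ^ 3). intros X Qt Q0 Htri H2.
  assert (Hx : X <= 2 * b * r ^ 2 * (1 + t) + (Qt - 2 * r ^ 2 * (1 + t)) + eps * r).
  { apply Rmult_le_reg_l with t. lra. nra. }
  assert (b * r ^ 2 * t <= r ^ 2 * t).
  { assert (0 <= r ^ 2 * t) by nra. nra. }
  nra.
Qed.

End F3.

Definition gg (b al x : R) := (1 - al) + (1 + al) * x - 2 * (1 - x) ^ 3 * ((1 - al) + (2 - al) * (1 - b) * x).
Definition gg' (b al x : R) := (1 + al) + (1 - x) ^ 2 * (6 * (1 - al) + 6 * ((2 - al) * (1 - b)) - 8 * ((2 - al) * (1 - b)) * (1 - x)).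

Lemma gg'_pos b al x : 0 <= b <= 1 -> 0 <= al < 1 -> 0 <= x <= 1 -> 0 < gg' b al x.
Proof.
  intros Hb Ha Hx. unfold gg'.
  set (c := (2 - al) * (1 - b)).
  assert (Hc0 : 0 <= c) by (unfold c; nra).
  assert (Hc1 : c <= 2 - al) by (unfold c; nra).
  clearbody c. set (y := 1 - x). assert (Hy : 0 <= y <= 1) by (unfold y; lra). clearbody y.
  assert (H1 : y ^ 2 * (6 * (1 - al) + 6 * c - 8 * c * y) >= y ^ 2 * (6 * (1 - al) - 2 * c)).
  { assert (0 <= y ^ 2) by nra. assert (0 <= 8 * c * (1 - y)) by nra. nra. }
  assert (H2 : y ^ 2 * (6 * (1 - al) - 2 * c) >= y ^ 2 * (2 - 4 * al)).
  { assert (0 <= y ^ 2) by nra. nra. }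
  destruct (Rle_dec 0 (2 - 4 * al)).
  - assert (0 <= y ^ 2 * (2 - 4 * al)) by (apply Rmult_le_pos; nra). lra.
  - assert (y ^ 2 <= 1) by nra. assert (y ^ 2 * (2 - 4 * al) >= 2 - 4 * al) by nra. lra.
Qed.

Lemma gg_deriv b al x : derivable_pt_lim (gg b al) x (gg' b al x).
Proof.
  apply is_derive_Reals. unfold gg, gg'. auto_derive. auto. ring.
Qed.

Lemma gg_mono b al r s : 0 <= b <= 1 -> 0 <= al < 1 -> 0 <= r -> r < s -> s <= 1 -> gg b al r < gg b al s.
Proof.
  intros Hb Ha Hr Hrs Hs.
  destruct (MVT_cor2 (gg b al) (gg' b al) r s Hrs (fun c _ => gg_deriv b al c)) as [c [Hc1 Hc2]].
  pose proof (gg'_pos b al c Hb Ha (ltac:(lra))). nra.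
Qed.

Definition Nn (b r : R) := 2 * b * r ^ 2 + 2 * r ^ 2 / (1 - r) ^ 3 - 2 * r ^ 2.
Definition Dd (b r : R) := r - 2 * b * r ^ 2 - T r.

Lemma RL b al rho r : 0 <= b <= 1 -> 0 <= al < 1 -> 0 < rho < 1 -> r0_eq b al rho ->
  0 < r <= rho -> 0 < Nn b r /\ 0 < Dd b r /\ Nn b r <= (1 - al) * Dd b r /\
  (r < rho -> Nn b r < (1 - al) * Dd b r).
Proof.
  intros Hb Ha Hrho Heq Hr.
  assert (Hid : Nn b r - (1 - al) * Dd b r = r * gg b al r / (1 - r) ^ 3).
  { unfold Nn, Dd, T, gg. field. lra. }
  assert (Hg0 : gg b al rho = 0) by (unfold gg, r0_eq in *; lra).
  assert (Hgle : gg b al r <= 0).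
  { destruct (Req_dec r rho). subst; lra. pose proof (gg_mono b al r rho Hb Ha ltac:(lra) ltac:(lra) ltac:(lra)). lra. }
  assert (H3 : 0 < (1 - r) ^ 3) by (apply pow_lt; lra).
  assert (Hnp : 0 < Nn b r).
  { unfold Nn. assert (Hc3 : (1 - r) ^ 3 < 1).
    { assert (0 < (1 - r) * (1 - r) < 1) by nra. simpl. nra. }
    assert (Hi : 1 < 1 / (1 - r) ^ 3).
    { apply (Rmult_lt_reg_r ((1 - r) ^ 3)). auto. field_simplify; lra. }
    assert (Hr2 : 0 < r ^ 2) by nra.
    replace (2 * r ^ 2 / (1 - r) ^ 3) with (2 * r ^ 2 * (1 / (1 - r) ^ 3)) by (field; lra).
    revert Hi Hr2. generalize (1 / (1 - r) ^ 3) (r ^ 2). intros u v Hi Hr2. clear -Hi Hr2 Hb. nra. }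
  assert (Hle : Nn b r <= (1 - al) * Dd b r).
  { assert (r * gg b al r / (1 - r) ^ 3 <= 0).
    { unfold Rdiv. assert (Hi : 0 < / (1 - r) ^ 3) by (apply Rinv_0_lt_compat; auto).
      revert Hi Hgle. generalize (/ (1 - r) ^ 3) (gg b al r). intros u v Hi Hg. assert (Hru : 0 < r * u) by (apply Rmult_lt_0_compat; lra). clear -Hi Hg Hr Hru. nra. }
    lra. }
  split; [auto|split; [|split; [auto|]]].
  - assert (0 < (1 - al) * Dd b r) by lra.
    revert H. generalize (Dd b r). intros u H. clear -H Ha. nra.
  - intros Hlt. pose proof (gg_mono b al r rho Hb Ha ltac:(lra) Hlt ltac:(lra)).
    assert (r * gg b al r / (1 - r) ^ 3 < 0).
    { unfold Rdiv. assert (Hi : 0 < / (1 - r) ^ 3) by (apply Rinv_0_lt_compat; auto).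
      assert (Hg : gg b al r < 0) by lra.
      revert Hi Hg. generalize (/ (1 - r) ^ 3) (gg b al r). intros u v Hi Hg. assert (Hru : 0 < r * u) by (apply Rmult_lt_0_compat; lra). clear -Hi Hg Hr Hru. nra. }
    lra.
Qed.

Section F4.
Variables (b : R) (f : C -> C) (a : nat -> C).
Hypothesis Hc : coeffs_Ab b f a.
Hypothesis Hn : forall n, (3 <= n)%nat -> Cmod (a n) <= INR n.
Hypothesis Hb : 0 <= b <= 1.

Lemma E2 z : Cmod z < 1 -> Dd b (Cmod z) <= Cmod (f z).
Proof.
  intros Hz. pose proof (LB b f a Hc Hn z Hz) as HL.
  destruct Hc as [_ [_ [H2 _]]].
  assert (Ha2 : Cmod (a 2%nat * (z * z))%C = 2 * b * Cmod z ^ 2).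
  { rewrite !Cmod_mult, H2. ring. }
  assert (Hz' : z = (f z - (a 2%nat * (z * z)) - (f z - z - a 2%nat * (z * z)))%C) by ring.
  assert (Ht : Cmod z <= Cmod (f z) + Cmod (a 2%nat * (z * z))%C + Cmod (f z - z - a 2%nat * (z * z))%C).
  { rewrite Hz' at 1. unfold Cminus. eapply Rle_trans. apply Cmod_triangle. rewrite Cmod_opp.
    apply Rplus_le_compat_r. eapply Rle_trans. apply Cmod_triangle. rewrite Cmod_opp. lra. }
  unfold Dd. lra.
Qed.

Lemma core al rho z d : 0 <= al < 1 -> 0 < rho < 1 -> r0_eq b al rho ->
  0 < Cmod z <= rho -> is_derive (K:=C_AbsRing) (V:=C_NormedModule) f z d ->
  f z <> 0%C /\ Cmod (z * d / f z - 1)%C <= 1 - al /\ (Cmod z < rho -> Cmod (z * d / f z - 1)%C < 1 - al).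
Proof.
  intros Ha Hrho Heq Hz Hd.
  pose proof (E1 b f a Hc Hn Hb z d ltac:(lra) Hd) as H1.
  pose proof (E2 z ltac:(lra)) as H2.
  pose proof (RL b al rho (Cmod z) Hb Ha Hrho Heq Hz) as [HN [HD [Hle Hlt]]].
  fold (Nn b (Cmod z)) in H1.
  assert (Hf : f z <> 0%C).
  { intros E. rewrite E, Cmod_0 in H2. lra. }
  assert (Hw : (z * d / f z - 1 = (z * d - f z) / f z)%C) by (field; auto).
  rewrite Hw, Cmod_div by auto.
  assert (Hfp : 0 < Cmod (f z)) by lra.
  revert H1 H2 Hle Hlt Hfp HD. generalize (Cmod (z * d - f z)%C) (Cmod (f z)) (Nn b (Cmod z)) (Dd b (Cmod z)).
  intros X Y N D H1 H2 Hle Hlt Hfp HD.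
  split; auto. split.
  - apply (Rmult_le_reg_r Y); auto. unfold Rdiv. rewrite Rmult_assoc, Rinv_l by lra.
    assert ((1 - al) * D <= (1 - al) * Y) by (apply Rmult_le_compat_l; lra). lra.
  - intros Hl. specialize (Hlt Hl).
    apply (Rmult_lt_reg_r Y); auto. unfold Rdiv. rewrite Rmult_assoc, Rinv_l by lra.
    assert ((1 - al) * D <= (1 - al) * Y) by (apply Rmult_le_compat_l; lra). lra.
Qed.
End F4.

Notation CD := (is_derive (K:=C_AbsRing) (V:=AbsRing_NormedModule C_AbsRing)).

Lemma tr1 (f : C -> C) x l : CD f x l -> is_derive (K:=C_AbsRing) (V:=C_NormedModule) f x l.
Proof. intros [_ H]. split. apply is_linear_scal_l. intros x' Hx' eps. exact (H x' Hx' eps). Qed.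

Lemma dC_id (x : C) : CD (fun t => t) x (RtoC 1).
Proof. exact (is_derive_id (K:=C_AbsRing) x). Qed.

Lemma dC_const (c : C) (x : C) : CD (fun _ => c) x (RtoC 0).
Proof. exact (is_derive_const (K:=C_AbsRing) (V:=AbsRing_NormedModule C_AbsRing) c x). Qed.

Lemma dC_plus (f g : C -> C) (x df dg : C) : CD f x df -> CD g x dg -> CD (fun t => f t + g t)%C x (df + dg)%C.
Proof. intros. exact (is_derive_plus (K:=C_AbsRing) (V:=AbsRing_NormedModule C_AbsRing) f g x df dg H H0). Qed.

Lemma dC_minus (f g : C -> C) (x df dg : C) : CD f x df -> CD g x dg -> CD (fun t => f t - g t)%C x (df - dg)%C.
Proof. intros. exact (is_derive_minus (K:=C_AbsRing) (V:=AbsRing_NormedModule C_AbsRing) f g x df dg H H0). Qed.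

Lemma dC_mult (f g : C -> C) (x df dg : C) : CD f x df -> CD g x dg -> CD (fun t => f t * g t)%C x (df * g x + f x * dg)%C.
Proof. intros. exact (is_derive_mult (K:=C_AbsRing) f g x df dg H H0 Cmult_comm). Qed.

Lemma dC_comp (f g : C -> C) (x df dg : C) : CD f (g x) df -> CD g x dg -> CD (fun t => f (g t)) x (dg * df)%C.
Proof. intros. exact (is_derive_comp (K:=C_AbsRing) (V:=AbsRing_NormedModule C_AbsRing) f g x df dg H H0). Qed.

Lemma dC_inv (x : C) : x <> 0%C -> CD Cinv x (- / (x * x))%C.
Proof.
  intros Hx. split. apply is_linear_scal_l.
  intros x' Hx'. apply (is_filter_lim_locally_unique (K:=C_AbsRing) (V:=AbsRing_NormedModule C_AbsRing)) in Hx'. subst x'.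
  intros eps.
  assert (Hm : 0 < Cmod x) by (apply Cmod_gt_0; auto).
  assert (Hd : 0 < Rmin (Cmod x / 2) (eps * Cmod x ^ 3 / 2)).
  { apply Rmin_pos. lra. apply Rdiv_lt_0_compat; [|lra]. apply Rmult_lt_0_compat. apply cond_pos. apply pow_lt; lra. }
  exists (mkposreal _ Hd). intros y Hy.
  apply AbsRing_norm_compat2 in Hy. simpl in Hy. rewrite Rmult_1_l in Hy.
  change (abs (minus y x)) with (Cmod (y - x)%C) in Hy.
  change (Cmod (/ y - / x - (y - x) * (- / (x * x)))%C <= eps * Cmod (y - x)%C).
  assert (Hy1 : Cmod (y - x)%C < Cmod x / 2) by (eapply Rlt_le_trans; [apply Hy|apply Rmin_l]).
  assert (Hy2 : Cmod (y - x)%C < eps * Cmod x ^ 3 / 2) by (eapply Rlt_le_trans; [apply Hy|apply Rmin_r]).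
  assert (Hyx : Cmod x / 2 <= Cmod y).
  { pose proof (Cmod_triangle (x - y) y) as Ht. replace (x - y + y)%C with x in Ht by ring.
    replace (x - y)%C with (- (y - x))%C in Ht by ring. rewrite Cmod_opp in Ht. lra. }
  assert (Hy0 : (y : C) <> RtoC 0). { intros E. rewrite E, Cmod_0 in Hyx. lra. }
  replace (/ y - / x - (y - x) * (- / (x * x)))%C with ((y - x) * (y - x) / (x * x * y))%C by (field; auto).
  rewrite Cmod_div by (repeat apply Cmult_neq_0; auto). rewrite !Cmod_mult.
  set (u := Cmod (y - x)%C) in *. set (m := Cmod x) in *. set (n := Cmod y) in *.
  assert (Hu : 0 <= u) by apply Cmod_ge_0. clearbody u m n.
  assert (Hmmn : 0 < m * m * n) by (apply Rmult_lt_0_compat; nra).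
  apply (Rmult_le_reg_r (m * m * n)); auto. unfold Rdiv. rewrite Rmult_assoc, Rinv_l by lra. rewrite Rmult_1_r.
  assert (H3 : m ^ 3 / 2 <= m * m * n) by (simpl; nra).
  assert (H4 : u <= eps * (m ^ 3 / 2)) by (unfold Rdiv in *; lra).
  assert (H5 : eps * (m ^ 3 / 2) <= eps * (m * m * n)) by (apply Rmult_le_compat_l; [apply Rlt_le, cond_pos|auto]).
  nra.
Qed.

Definition Dr (b x : R) := 2 + 4 * (1 - b) * x - (1 + x) / (1 - x) ^ 3.
Definition Fr (b x : R) := 2 * x + 2 * (1 - b) * x ^ 2 - x / (1 - x) ^ 2.

Lemma deq (f : C -> C) x l l' : CD f x l -> l = l' -> CD f x l'.
Proof. intros H E; subst; auto. Qed.

Lemma f0_R b x : x <> 1 -> f0 b (RtoC x) = RtoC (Fr b x).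
Proof.
  intros Hx. unfold f0, Fr. apply injective_projections; simpl; field; lra.
Qed.

Lemma f0_deriv b x : x <> 1 -> CD (f0 b) (RtoC x) (RtoC (Dr b x)).
Proof.
  intros Hx.
  assert (Hg : ((1 - RtoC x) * (1 - RtoC x))%C <> RtoC 0).
  { rewrite <- RtoC_minus, <- RtoC_mult. intros E. apply RtoC_inj in E. apply Hx. nra. }
  eapply deq.
  - apply (is_derive_ext (K:=C_AbsRing) (V:=AbsRing_NormedModule C_AbsRing) (fun t => (2 * t + 2 * (1 - b) * t * t - t * Cinv ((1 - t) * (1 - t)))%C) (f0 b)).
    { intros t. reflexivity. }
    apply dC_minus. apply dC_plus. apply dC_mult. apply dC_const. apply dC_id.
    apply dC_mult. apply dC_mult. apply dC_const. apply dC_id. apply dC_id.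
    apply dC_mult. apply dC_id.
    apply (dC_comp Cinv (fun t => (1 - t) * (1 - t))%C).
    + apply dC_inv. exact Hg.
    + apply dC_mult; (apply dC_minus; [apply dC_const|apply dC_id]).
  - unfold Dr. cbv beta. apply injective_projections; simpl; field; lra.
Qed.

Lemma deriv_unique (f : C -> C) x d1 d2 :
  is_derive (K:=C_AbsRing) (V:=C_NormedModule) f x d1 ->
  is_derive (K:=C_AbsRing) (V:=C_NormedModule) f x d2 -> d1 = d2.
Proof.
  intros H1 H2.
  assert (Hle : Cmod (d1 - d2)%C <= 0).
  { apply eps_le with (c := 2). lra. intros eps He.
    destruct (DER f x d1 H1 eps He) as [del1 [Hd1 K1]].
    destruct (DER f x d2 H2 eps He) as [del2 [Hd2 K2]].
    set (h := Rmin del1 del2 / 2).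
    assert (Hh : 0 < h) by (unfold h; apply Rdiv_lt_0_compat; [apply Rmin_pos|]; lra).
    assert (Hh1 : h < del1) by (unfold h; pose proof (Rmin_l del1 del2); lra).
    assert (Hh2 : h < del2) by (unfold h; pose proof (Rmin_r del1 del2); lra).
    clearbody h.
    assert (Hyx : Cmod (x + RtoC h - x)%C = h).
    { replace (x + RtoC h - x)%C with (RtoC h) by ring. rewrite Cmod_R, Rabs_pos_eq; lra. }
    specialize (K1 (x + RtoC h)%C ltac:(lra)). specialize (K2 (x + RtoC h)%C ltac:(lra)).
    rewrite Hyx in K1, K2.
    assert (Hid : (RtoC h * (d1 - d2) = (f (x + RtoC h) - f x - (x + RtoC h - x) * d2) - (f (x + RtoC h) - f x - (x + RtoC h - x) * d1))%C) by ring.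
    assert (Hb : h * Cmod (d1 - d2)%C <= eps * h + eps * h).
    { replace (h * Cmod (d1 - d2)%C) with (Cmod (RtoC h * (d1 - d2))%C) by (rewrite Cmod_mult, Cmod_R, Rabs_pos_eq; lra).
      rewrite Hid. unfold Cminus at 1. eapply Rle_trans. apply Cmod_triangle. rewrite Cmod_opp. lra. }
    assert (Cmod (d1 - d2)%C <= 2 * eps).
    { apply (Rmult_le_reg_l h); auto. lra. }
    lra. }
  pose proof (Cmod_ge_0 (d1 - d2)%C).
  assert (E : Cmod (d1 - d2)%C = 0) by lra. apply Cmod_eq_0 in E.
  change (@eq C d1 d2). replace d1 with ((d1 - d2) + d2)%C by ring. rewrite E. ring.
Qed.

Definition a0 (b : R) (k : nat) : C :=
  if (k =? 1)%nat then RtoC 1 else if (k =? 2)%nat then RtoC (- (2 * b)) else RtoC (- INR k).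

Lemma f0_in_F b : 0 <= b <= 1 -> in_F b (f0 b).
Proof.
  intros Hb. exists (a0 b). split; [split; [|split; [|split]]|].
  - unfold a0. simpl. f_equal. ring.
  - reflexivity.
  - unfold a0. simpl. rewrite Cmod_R, Rabs_Ropp, Rabs_pos_eq; lra.
  - intros z Hz. unfold is_pseries.
    assert (H1z : 0 < Cmod (1 - z)%C) by (pose proof (Cmod_1m z); lra).
    assert (Hnz : (1 - z)%C <> RtoC 0) by (intro E; rewrite E, Cmod_0 in H1z; lra).
    pose proof (is_series_opp _ _ (cseries_k z Hz)) as H1.
    set (s := fun k => if (k <? 3)%nat then (cp z k * (a0 b k + RtoC (INR k)))%C else zero).
    assert (H2 : is_series (K:=C_AbsRing) (V:=C_NormedModule) s (sum_n s 2)).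
    { apply (is_series_fin (K:=C_AbsRing) (V:=C_NormedModule) s 2). intros k Hk. unfold s. destruct (Nat.ltb_spec k 3); [lia|reflexivity]. }
    pose proof (is_series_plus _ _ _ _ H1 H2) as H3.
    assert (Hs2 : sum_n s 2 = (RtoC 2 * z + RtoC 2 * RtoC (1 - b) * (z * z))%C).
    { rewrite !sum_Sn, sum_O. unfold s. simpl Nat.ltb. cbv iota.
      change ((cp z 0 * (a0 b 0 + INR 0) + cp z 1 * (a0 b 1 + INR 1)) + cp z 2 * (a0 b 2 + INR 2)
               = RtoC 2 * z + RtoC 2 * RtoC (1 - b) * (z * z))%C.
      rewrite !cp_S, !cp_0. unfold a0. simpl.
      rewrite ?RtoC_opp, ?RtoC_plus, ?RtoC_minus, ?RtoC_mult. replace (RtoC 2) with (RtoC 1 + RtoC 1)%C by (rewrite <- RtoC_plus; f_equal; ring). ring. }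
    assert (Hv : f0 b z = (- (z / ((1 - z) * (1 - z))) + (RtoC 2 * z + RtoC 2 * RtoC (1 - b) * (z * z)))%C).
    { unfold f0. rewrite !RtoC_minus. field. auto. }
    rewrite Hv, <- Hs2.
    eapply is_series_ext. 2: exact H3.
    intros k. change ((- (cp z k * RtoC (INR k)) + s k)%C = cp z k * a0 b k)%C.
    unfold s. destruct (Nat.ltb_spec k 3).
    + ring.
    + unfold a0. destruct (Nat.eqb_spec k 1); [lia|]. destruct (Nat.eqb_spec k 2); [lia|].
      change (zero (G:=C_AbelianMonoid)) with (RtoC 0). rewrite RtoC_opp. ring.
  - intros n Hn. unfold a0. destruct (Nat.eqb_spec n 1); [lia|]. destruct (Nat.eqb_spec n 2); [lia|].
    rewrite Cmod_R, Rabs_Ropp, Rabs_pos_eq. lra. apply pos_INR.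
Qed.

Lemma sharp b al rho : 0 <= b <= 1 -> 0 <= al < 1 -> 0 < rho < 1 -> r0_eq b al rho ->
  forall d, is_derive (K:=C_AbsRing) (V:=C_NormedModule) (f0 b) (RtoC rho) d ->
  (RtoC rho * d / f0 b (RtoC rho))%C = RtoC al.
Proof.
  intros Hb Ha Hrho Heq d Hd.
  assert (Hx : rho <> 1) by lra.
  pose proof (deriv_unique _ _ _ _ Hd (tr1 _ _ _ (f0_deriv b rho Hx))) as E. subst d.
  rewrite (f0_R b rho Hx).
  pose proof (RL b al rho rho Hb Ha Hrho Heq ltac:(lra)) as [HN [HD _]].
  assert (HFD : Fr b rho = Dd b rho) by (unfold Fr, Dd, T; field; lra).
  assert (HDN : rho * Dr b rho - Fr b rho = - Nn b rho) by (unfold Dr, Fr, Nn; field; lra).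
  assert (Hid : Nn b rho - (1 - al) * Dd b rho = rho * gg b al rho / (1 - rho) ^ 3).
  { unfold Nn, Dd, T, gg. field. lra. }
  assert (Hg0 : gg b al rho = 0) by (unfold gg, r0_eq in *; lra).
  rewrite Hg0, Rmult_0_r in Hid. unfold Rdiv in Hid. rewrite Rmult_0_l in Hid.
  assert (HF : Fr b rho <> 0) by lra.
  rewrite <- RtoC_mult, <- RtoC_div by auto. f_equal.
  apply (Rmult_eq_reg_r (Fr b rho)); auto. unfold Rdiv. rewrite Rmult_assoc, Rinv_l by auto.
  rewrite HFD in *. lra.
Qed.

Lemma re_bound (w : C) al : Cmod (w - 1)%C < 1 - al -> al < Re w.
Proof.
  intros H. pose proof (re_le_Cmod (w - 1)%C) as H2.
  destruct w as [p q]. simpl in *. apply Rabs_le_between' in H2.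
  assert (E : p + - (1) = p - 1) by ring. unfold Rminus in H2 |- *. lra.
Qed.

Lemma Cmod_RtoC_m1 x : x <= 1 -> Cmod (RtoC x - 1)%C = 1 - x.
Proof. intros H. rewrite <- RtoC_minus, Cmod_R, Rabs_left1; lra. Qed.

Lemma core_F b f al rho z d w : 0 <= b <= 1 -> in_F b f -> 0 <= al < 1 -> 0 < rho < 1 -> r0_eq b al rho ->
  Cmod z <= rho -> is_derive (K:=C_AbsRing) (V:=C_NormedModule) f z d -> logquot f z d w ->
  Cmod (w - 1)%C <= 1 - al /\ (Cmod z < rho -> Cmod (w - 1)%C < 1 - al) /\ (0 < Cmod z -> f z <> 0%C).
Proof.
  intros Hb [a [Hc Hn]] Ha Hrho Heq Hz Hd [[Ez Ew] | [Ez Ew]].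
  - subst. replace (RtoC 1 - RtoC 1)%C with (RtoC 0) by ring. rewrite Cmod_0.
    split; [lra|split; [lra|]]. intros; lra.
  - assert (Hz0 : 0 < Cmod z) by (apply Cmod_gt_0; auto).
    destruct (core b f a Hc Hn Hb al rho z d Ha Hrho Heq (conj Hz0 Hz) Hd) as [Hf [H1 H2]].
    subst w. split; auto.
Qed.

Lemma nz_F b f al rho z : 0 <= b <= 1 -> in_F b f -> 0 <= al < 1 -> 0 < rho < 1 -> r0_eq b al rho ->
  0 < Cmod z <= rho -> f z <> 0%C.
Proof.
  intros Hb [a [Hc Hn]] Ha Hrho Heq Hz.
  pose proof (E2 b f a Hc Hn z ltac:(lra)) as H2.
  pose proof (RL b al rho (Cmod z) Hb Ha Hrho Heq Hz) as [_ [HD _]].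
  intros E. rewrite E, Cmod_0 in H2. lra.
Qed.

Theorem theorem2p1 (b alpha r0 : R)
  (hb : 0 <= b <= 1) (ha : 0 <= alpha < 1)
  (hr0 : 0 < r0 < 1) (heq : r0_eq b alpha r0) :
  (* (i) *)
  (forall f, in_F b f ->
     forall z d w : C, Cmod z <= r0 ->
       is_derive (K:=C_AbsRing) (V:=C_NormedModule) f z d ->
       logquot f z d w -> Cmod (w - 1)%C <= 1 - alpha) /\
  (* (ii) *)
  radius_starlike b alpha r0 /\
  (* (iii) *)
  (forall r1 : R, 0 < r1 < 1 -> r0_eq b (1/2) r1 -> radius_parabolic b r1) /\
  (* sharpness *)
  (in_F b (f0 b) /\
   forall d : C, is_derive (K:=C_AbsRing) (V:=C_NormedModule) (f0 b) (RtoC r0) d ->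
     Cmod (RtoC r0 * d / f0 b (RtoC r0) - 1)%C = 1 - alpha /\
     Re (RtoC r0 * d / f0 b (RtoC r0))%C = alpha).
Proof.
  split; [|split; [|split]].
  - intros f Hf z d w Hz Hd Hw.
    exact (proj1 (core_F b f alpha r0 z d w hb Hf ha hr0 heq Hz Hd Hw)).
  - split.
    + intros r [Hr Hst]. destruct (Rle_dec r r0) as [|Hn]; auto. exfalso.
      destruct (Hst (f0 b) (f0_in_F b hb)) as [_ H2].
      assert (Hx : r0 <> 1) by lra.
      pose proof (tr1 _ _ _ (f0_deriv b r0 Hx)) as Hd.
      specialize (H2 (RtoC r0) _ (RtoC r0 * RtoC (Dr b r0) / f0 b (RtoC r0))%C
        ltac:(rewrite Cmod_R, Rabs_pos_eq; lra) Hd).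
      assert (Hne : RtoC r0 <> RtoC 0) by (intro E; apply RtoC_inj in E; lra).
      specialize (H2 (or_intror (conj Hne eq_refl))).
      rewrite (sharp b alpha r0 hb ha hr0 heq _ Hd) in H2.
      simpl in H2. lra.
    + intros u Hu. apply Hu. split. lra.
      intros f Hf. split.
      * intros z Hz. apply (nz_F b f alpha r0 z hb Hf ha hr0 heq). lra.
      * intros z d w Hz Hd Hw.
        destruct (core_F b f alpha r0 z d w hb Hf ha hr0 heq ltac:(lra) Hd Hw) as [_ [H2 _]].
        apply re_bound. auto.
  - intros r1 Hr1 Heq1. assert (Ha1 : 0 <= 1/2 < 1) by lra. split.
    + intros r [Hr Hpar]. destruct (Rle_dec r r1) as [|Hn]; auto. exfalso.
      assert (Hx : r1 <> 1) by lra.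
      pose proof (tr1 _ _ _ (f0_deriv b r1 Hx)) as Hd.
      assert (Hne : RtoC r1 <> RtoC 0) by (intro E; apply RtoC_inj in E; lra).
      specialize (Hpar (f0 b) (f0_in_F b hb) (RtoC r1) _ (RtoC r1 * RtoC (Dr b r1) / f0 b (RtoC r1))%C
        ltac:(rewrite Cmod_R, Rabs_pos_eq; lra) Hd (or_intror (conj Hne eq_refl))).
      rewrite (sharp b (1/2) r1 hb Ha1 Hr1 Heq1 _ Hd) in Hpar.
      rewrite Cmod_RtoC_m1 in Hpar by lra. simpl in Hpar. lra.
    + intros u Hu. apply Hu. split. lra. intros f Hf z d w Hz Hd Hw.
      destruct (core_F b f (1/2) r1 z d w hb Hf Ha1 Hr1 Heq1 ltac:(lra) Hd Hw) as [_ [H2 _]].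
      specialize (H2 Hz). pose proof (re_bound w (1/2) H2). lra.
  - split. apply f0_in_F; auto. intros d Hd.
    rewrite (sharp b alpha r0 hb ha hr0 heq _ Hd). split.
    apply Cmod_RtoC_m1; lra. reflexivity.
Qed.
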